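(* Let $\mathbf{B}$ be a real $d\times n$ matrix with nonnegative entries and $\operatorname{rank}(\mathbf{B})=k+1$, where $k\ge1$, with nonzero singular values $s_1\ge\cdots\ge s_k\ge s_{k+1}>0$, and suppose $s_k>s_{k+1}$. Let $\mathbf{U}_s\in\mathbb{R}^{d\times k}$ be the matrix whose columns are orthonormal left singular vectors of $\mathbf{B}$ corresponding to $s_1,\dots,s_k$. Consider the problem $$\min_{\mathbf{V}\in\mathbb{R}^{n\times k}}\ \|\mathbf{B}-\mathbf{U}_s\mathbf{V}^T\|_F^2\quad\text{subject to}\quad \mathbf{U}_s\mathbf{V}^T\ge 0\ \text{(entrywise)}.$$ Then this problem has a unique minimizer $\mathbf{V}^\ast$, and the resulting nonnegative approximation $\mathbf{A}=\mathbf{U}_s(\mathbf{V}^\ast)^T$ is uniquely determined by $\mathbf{B}$ (i.e., it does not depend on the choice of the singular vectors).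
   Context: $\|\cdot\|_F$ denotes the Frobenius norm; a matrix inequality $\mathbf{M}\ge 0$ means all entries of $\mathbf{M}$ are nonnegative. *)

(* Defs.v *)
From HB Require Import structures.
From mathcomp Require Import all_boot all_order all_algebra.
Set Implicit Arguments. Unset Strict Implicit. Unset Printing Implicit Defensive.
Import Order.TTheory GRing.Theory Num.Theory.
Local Open Scope ring_scope.

Section Defs.
Variable R : rcfType.

Definition frob_norm (m n : nat) (M : 'M[R]_(m, n)) : R :=
  Num.sqrt (\sum_(i < m) \sum_(j < n) (M i j) ^+ 2).

Definition nonneg_mx (m n : nat) (M : 'M[R]_(m, n)) : Prop :=
  forall i j, 0 <= M i j.

Definition nz_singular_values (d n r : nat) (B : 'M[R]_(d, n)) (s : 'I_r -> R)
  : Prop :=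
  (forall i j : 'I_r, (i <= j)%N -> s j <= s i) /\ (forall i, 0 < s i) /\
  exists (U : 'M[R]_(d, r)) (W : 'M[R]_(n, r)),
    U^T *m U = 1%:M /\ W^T *m W = 1%:M /\
    B = U *m diag_mx (\row_i s i) *m W^T.

Definition left_singular_vector (d n : nat) (B : 'M[R]_(d, n)) (sigma : R)
  (u : 'cV[R]_d) : Prop :=
  u^T *m u = 1%:M /\
  exists v : 'cV[R]_n, v^T *m v = 1%:M /\
    B *m v = sigma *: u /\ B^T *m u = sigma *: v.

Definition nn_minimizer (d n k : nat) (B : 'M[R]_(d, n)) (Us : 'M[R]_(d, k))
  (V : 'M[R]_(n, k)) : Prop :=
  nonneg_mx (Us *m V^T) /\
  forall W : 'M[R]_(n, k), nonneg_mx (Us *m W^T) ->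
    frob_norm (B - Us *m V^T) ^+ 2 <= frob_norm (B - Us *m W^T) ^+ 2.

End Defs.

(* Main.v *)
Require Import Defs.
From HB Require Import structures.
From mathcomp Require Import all_boot all_order all_algebra.
From mathcomp Require Import ring lra zify.
Set Implicit Arguments. Unset Strict Implicit. Unset Printing Implicit Defensive.
Import Order.TTheory GRing.Theory Num.Theory.
Local Open Scope ring_scope.


Section Core.
Variable R : rcfType.

Lemma finmin (I : finType) (P : pred I) (F : I -> R) i0 :
  P i0 -> exists2 i, P i & forall j, P j -> F i <= F j.
Proof.
move=> Pi0; case: (@arg_minP _ R I i0 P F Pi0) => i Pi H.
by exists i.
Qed.

Lemma mx_self_tr0 m n (N : 'M[R]_(m, n)) : N *m N^T = 0 -> N = 0.
Proof.
move=> H; apply/matrixP=> i j; rewrite mxE.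
move/matrixP/(_ i i): H; rewrite !mxE => /eqP.
rewrite psumr_eq0; last by move=> l _; rewrite mxE -expr2 sqr_ge0.
move/allP/(_ j (mem_index_enum _))/implyP/(_ isT).
by rewrite mxE -expr2 sqrf_eq0 => /eqP.
Qed.

Lemma rank_trmul m q (M : 'M[R]_(m, q)) : \rank (M^T *m M) = \rank M.
Proof.
have k1 : (kermx (M^T *m M) <= kermx M^T)%MS.
  apply/sub_kermxP; apply: mx_self_tr0.
  by rewrite trmx_mul trmxK mulmxA -(mulmxA _ M^T) mulmx_ker mul0mx.
have k2 : (kermx M^T <= kermx (M^T *m M))%MS.
  by apply/sub_kermxP; rewrite mulmxA mulmx_ker mul0mx.
have := mxrankS k1; have := mxrankS k2; rewrite !mxrank_ker mxrank_tr.
have := rank_leq_col (M^T *m M); have := rank_leq_col M.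
lia.
Qed.

Definition nr m (v : 'rV[R]_m) : R := (v *m v^T) 0 0.

Lemma nr_ge0 m (v : 'rV[R]_m) : 0 <= nr v.
Proof. rewrite /nr mxE; apply: sumr_ge0 => i _; rewrite mxE -expr2 sqr_ge0 //. Qed.

Lemma nrD m (a b : 'rV[R]_m) : nr (a + b) = nr a + 2 * (a *m b^T) 0 0 + nr b.
Proof.
rewrite /nr linearD /= mulmxDl !mulmxDr !mxE.
rewrite [\sum_j b 0 j * _](eq_bigr (fun j => a 0 j * b^T j 0)); last first.
  by move=> j _; rewrite !mxE mulrC.
ring.
Qed.

Definition proj m q (M : 'M[R]_(m, q)) (c : 'rV[R]_m) :=
  c - (c *m M *m pinvmx (M^T *m M)) *m M^T.

Lemma proj_ker m q (M : 'M[R]_(m, q)) c : proj M c *m M = 0.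
Proof.
have s1 : (M^T *m M <= M)%MS by apply: submxMl.
have s2 : (M <= M^T *m M)%MS.
  by rewrite -(mxrank_leqif_sup s1).2 rank_trmul.
rewrite /proj mulmxBl -[(_ *m M^T) *m M]mulmxA mulmxKpV ?subrr //.
exact: submx_trans (submxMl _ _) s2.
Qed.

Lemma proj_min m q (M : 'M[R]_(m, q)) c z :
  z *m M = 0 -> nr (c - proj M c) <= nr (c - z).
Proof.
move=> hz.
have -> : c - z = (c - proj M c) + (proj M c - z) by rewrite addrA subrK.
rewrite (nrD (c - proj M c)).
have -> : ((c - proj M c) *m (proj M c - z)^T) 0 0 = 0.
  rewrite {1}/proj opprB addrC subrK -mulmxA -trmx_mul mulmxBl proj_ker hz.
  by rewrite subrr trmx0 mulmx0 mxE.
by rewrite mulr0 addr0 lerDl nr_ge0.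
Qed.

Lemma nrZ m (s : R) (a : 'rV[R]_m) : nr (s *: a) = s ^+ 2 * nr a.
Proof. by rewrite /nr linearZ /= -scalemxAl -scalemxAr !mxE mulrA expr2. Qed.

Lemma crossZr m (s : R) (a b : 'rV[R]_m) :
  (a *m (s *: b)^T) 0 0 = s * (a *m b^T) 0 0.
Proof. rewrite !mxE mulr_sumr; apply: eq_bigr => j _; rewrite !mxE; ring. Qed.

Lemma crossZl m (s : R) (a b : 'rV[R]_m) :
  ((s *: a) *m b^T) 0 0 = s * (a *m b^T) 0 0.
Proof. rewrite !mxE mulr_sumr; apply: eq_bigr => j _; rewrite !mxE; ring. Qed.

Lemma nr_convex m (t : R) (a b : 'rV[R]_m) : 0 <= t <= 1 ->
  nr ((1 - t) *: a + t *: b) <= (1 - t) * nr a + t * nr b.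
Proof.
case/andP=> t0 t1.
have h := nr_ge0 (a + (-1) *: b).
rewrite nrD nrZ in h; rewrite nrD !nrZ.
rewrite crossZl crossZr; rewrite crossZr in h.
set A := nr a in h *; set Bn := nr b in h *; set C := (a *m b^T) 0 0 in h *.
have t2 : 0 <= t * (1 - t) by apply: mulr_ge0; lra.
have : 0 <= t * (1 - t) * (A + 2 * (-1 * C) + (-1) ^+ 2 * Bn) by apply: mulr_ge0.
move=> h2; rewrite -subr_ge0.
have -> : (1 - t) * A + t * Bn -
   ((1 - t) ^+ 2 * A + 2 * ((1 - t) * (t * C)) + t ^+ 2 * Bn)
   = t * (1 - t) * (A + 2 * (-1 * C) + (-1) ^+ 2 * Bn) by ring.
exact: h2.
Qed.

Section QP.
Variables (m p : nat) (G : 'M[R]_(m, p)) (c : 'rV[R]_m).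

Definition feas (x : 'rV[R]_m) := [forall j, 0 <= (x *m G) 0 j].
Definition act (x : 'rV[R]_m) : {set 'I_p} := [set j | (x *m G) 0 j == 0].
Definition GS (S : {set 'I_p}) : 'M[R]_(m, p) :=
  \matrix_(i, j) (if j \in S then G i j else 0).
Definition cand S := proj (GS S) c.

Lemma xGS (x : 'rV[R]_m) S j : (x *m GS S) 0 j = if j \in S then (x *m G) 0 j else 0.
Proof.
case: (boolP (j \in S)) => jS; rewrite !mxE.
  by apply: eq_bigr => i _; rewrite mxE jS.
by rewrite big1 // => i _; rewrite mxE (negbTE jS) mulr0.
Qed.

Lemma cand_le x : nr (c - cand (act x)) <= nr (c - x).
Proof.
apply: proj_min; apply/rowP => j; rewrite xGS [RHS]mxE.
by case: ifP => //; rewrite inE => /eqP.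
Qed.

Lemma cand_act (S : {set 'I_p}) j : j \in S -> (cand S *m G) 0 j = 0.
Proof.
move=> jS; have := proj_ker (GS S) c => /rowP /(_ j).
by rewrite xGS jS [RHS]mxE.
Qed.

Lemma step x : feas x -> feas (cand (act x)) \/
  exists z, [/\ feas z, nr (c - z) <= nr (c - x) & (#|~: act z| < #|~: act x|)%N].
Proof.
move=> fx; case fy: (feas (cand (act x))); first by left.
right; set S := act x; set y := cand S.
have [j1 Pj1] : exists j, (y *m G) 0 j < 0.
  move/negbT: fy; rewrite /feas negb_forall => /existsP [j]; rewrite -ltNge.
  by exists j.
pose a j : R := (x *m G) 0 j; pose b j : R := (y *m G) 0 j.
have ha j : 0 <= a j by move/forallP: fx.
have hP j : b j < 0 -> 0 < a j.
  move=> bj; rewrite lt_def ha andbT; apply/negP => /eqP a0.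
  have jS : j \in S by rewrite inE; apply/eqP.
  by move: bj; rewrite /b cand_act // ltxx.
pose F j := a j / (a j - b j).
have [j0 Pj0 minj0] := @finmin _ (fun j => b j < 0) F j1 Pj1.
pose t := F j0.
have a0 := hP _ Pj0.
have d0 : 0 < a j0 - b j0 by move: Pj0; lra.
have t0 : 0 <= t by apply: divr_ge0; [apply: ltW | apply: ltW].
have t1 : t <= 1 by rewrite /t /F ler_pdivrMr // mul1r; move: Pj0; lra.
pose z := x + t *: (y - x).
have zG j : (z *m G) 0 j = a j + t * (b j - a j).
  rewrite /z mulmxDl -scalemxAl mulmxBl {1}mxE; congr (_ + _); rewrite {1}mxE; congr (_ * _); rewrite {1}mxE; congr (_ + _); rewrite {1}mxE //.
have fz : feas z.
  apply/forallP => j; rewrite zG.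
  case: (leP 0 (b j)) => bj.
    have -> : a j + t * (b j - a j) = (1 - t) * a j + t * b j by ring.
    have := ha j; move: bj t0 t1; nra.
  have aj := hP _ bj.
  have dj : 0 < a j - b j by move: bj; lra.
  have : t <= F j := minj0 _ bj.
  rewrite /F ler_pdivlMr // => h.
  have -> : a j + t * (b j - a j) = a j - t * (a j - b j) by ring.
  by rewrite subr_ge0.
exists z; split => //.
  have -> : c - z = (1 - t) *: (c - x) + t *: (c - y).
    by apply/rowP => i; rewrite /z !mxE; ring.
  apply: le_trans (nr_convex _ _ _) _; first by rewrite t0 t1.
  have := cand_le x; rewrite -/S -/y => hy.
  have : t * nr (c - y) <= t * nr (c - x) by apply: ler_wpM2l.
  lra.
apply: proper_card; rewrite properEneq; apply/andP; split.
  apply/eqP => /setP /(_ j0); rewrite !inE.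
  rewrite zG /t /F; have -> : a j0 + a j0 / (a j0 - b j0) * (b j0 - a j0) = 0.
    by field; rewrite (gt_eqF d0).
  by rewrite eqxx (gt_eqF a0).
apply/subsetP => j; rewrite !inE; apply: contra => /eqP aj.
have jS : j \in S by rewrite inE; apply/eqP.
have bj : b j = 0 by rewrite /b cand_act.
by rewrite zG bj /a aj subrr mulr0 addr0.
Qed.

Lemma descent r x : feas x -> (#|~: act x| <= r)%N ->
  exists2 S, feas (cand S) & nr (c - cand S) <= nr (c - x).
Proof.
elim: r x => [|r IH] x fx hr.
  case: (step fx) => [f|[z [_ _ hz]]]; first by exists (act x) => //; exact: cand_le.
  by move: hz; rewrite ltnNge (leq_trans hr).
case: (step fx) => [f|[z [fz hz hc]]]; first by exists (act x) => //; exact: cand_le.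
have [S fS hS] := IH z fz (leq_trans (leq_trans hc hr) (leqnn _)).
by exists S => //; apply: le_trans hz.
Qed.

Lemma qp_exists : exists2 x, feas x & forall w, feas w -> nr (c - x) <= nr (c - w).
Proof.
have f0 : feas (cand setT).
  apply/forallP => j; rewrite cand_act ?inE //.
have [S fS minS] := @finmin _ (fun S => feas (cand S)) (fun S => nr (c - cand S)) _ f0.
exists (cand S) => // w fw.
have [S' fS' hS'] := descent fw (max_card (~: act w)).
exact: le_trans (minS _ fS') hS'.
Qed.
End QP.
End Core.


Section Main.
Variable R : rcfType.

Definition nrm2 m n (M : 'M[R]_(m, n)) : R := \sum_i \sum_j M i j ^+ 2.

Lemma frob_nrm2 m n (M : 'M[R]_(m, n)) : frob_norm M ^+ 2 = nrm2 M.
Proof.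
rewrite /frob_norm sqr_sqrtr //; apply: sumr_ge0 => i _; apply: sumr_ge0 => j _.
exact: sqr_ge0.
Qed.

Lemma nrm2_nr m n (M : 'M[R]_(m, n)) : nrm2 M = nr (mxvec M).
Proof.
rewrite /nr /nrm2 mxE (reindex _ (curry_mxvec_bij _ _)) /= pair_bigA.
by apply: eq_bigr => [[i j]] _ /=; rewrite !mxE mxvecE expr2.
Qed.

Lemma nrm2_tr m n (M : 'M[R]_(m, n)) : nrm2 M = \tr (M^T *m M).
Proof.
rewrite /nrm2 /mxtrace exchange_big; apply: eq_bigr => j _; rewrite mxE.
by apply: eq_bigr => i _; rewrite mxE expr2.
Qed.

Lemma nr0 m (v : 'rV[R]_m) : nr v = 0 -> v = 0.
Proof.
move=> h; apply: mx_self_tr0; apply/matrixP => i j.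
by rewrite !ord1 [RHS]mxE.
Qed.

Lemma mid_unique d n (B A1 A2 : 'M[R]_(d, n)) :
  nrm2 (B - A1) <= nrm2 (B - 2^-1 *: (A1 + A2)) ->
  nrm2 (B - A2) <= nrm2 (B - 2^-1 *: (A1 + A2)) -> A1 = A2.
Proof.
rewrite !nrm2_nr.
have -> : mxvec (B - 2^-1 *: (A1 + A2)) =
   2^-1 *: (mxvec (B - A1) + mxvec (B - A2)).
  by rewrite -linearD -linearZ /=; congr mxvec; apply/matrixP => i j; rewrite !mxE; field.
set a := mxvec (B - A1); set b := mxvec (B - A2).
rewrite nrZ nrD => h1 h2.
have h3 := nrD a ((-1) *: b); rewrite nrZ crossZr in h3.
have h4 : nr (a + (-1) *: b) <= 0.
  rewrite h3; move: h1 h2; set X := nr a; set Y := nr b; set C := (a *m b^T) 0 0.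
  move=> h1 h2; nra.
have h5 : nr (a + (-1) *: b) = 0 by apply/eqP; rewrite eq_le h4 nr_ge0.
have := nr0 h5; rewrite scaleN1r => /eqP; rewrite subr_eq0 => /eqP /(can_inj mxvecK) e.
by apply: oppr_inj; exact: (addrI B e).
Qed.

Lemma feasE d n k (Us : 'M[R]_(d, k)) (X : 'M[R]_(k, n)) :
  feas (lin_mulmx Us) (mxvec X) <-> nonneg_mx (Us *m X).
Proof.
rewrite /feas /lin_mulmx mul_vec_lin /=; split.
  by move/forallP => h i j; have := h (mxvec_index i j); rewrite mxvecE.
move=> h; apply/forallP => l; case/mxvec_indexP: l => i j; rewrite mxvecE.
exact: h.
Qed.

Lemma pyth d n k (Us : 'M[R]_(d, k)) (P : 'M[R]_(d, n)) (Y : 'M[R]_(k, n)) :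
  Us^T *m Us = 1%:M -> Us^T *m P = 0 ->
  nrm2 (P + Us *m Y) = nrm2 P + nrm2 Y.
Proof.
move=> hU hP; rewrite !nrm2_tr.
rewrite [(P + _)^T]linearD /= mulmxDl !mulmxDr !mxtraceD.
have e1 : P^T *m (Us *m Y) = 0.
  by rewrite mulmxA -[P^T *m Us]trmxK trmx_mul trmxK hP trmx0 mul0mx.
have e2 : (Us *m Y)^T *m P = 0 by rewrite trmx_mul -mulmxA hP mulmx0.
have e3 : (Us *m Y)^T *m (Us *m Y) = Y^T *m Y.
  by rewrite trmx_mul mulmxA -(mulmxA _ Us^T) hU mulmx1.
by rewrite e1 e2 e3 mxtrace0 addr0 add0r.
Qed.

Lemma decomp d n k (B : 'M[R]_(d, n)) (Us : 'M[R]_(d, k)) (X : 'M[R]_(k, n)) :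
  Us^T *m Us = 1%:M ->
  nrm2 (B - Us *m X) =
  nrm2 (B - Us *m (Us^T *m B)) + nr (mxvec (Us^T *m B) - mxvec X).
Proof.
move=> hU.
set P := B - Us *m (Us^T *m B).
have hP : Us^T *m P = 0.
  by rewrite /P mulmxBr [Us^T *m (Us *m _)]mulmxA hU mul1mx subrr.
have -> : B - Us *m X = P + Us *m (Us^T *m B - X).
  by rewrite /P mulmxBr addrA subrK.
rewrite -linearB /= -nrm2_nr; exact: pyth.
Qed.

Lemma exists_min d n k (B : 'M[R]_(d, n)) (Us : 'M[R]_(d, k)) :
  Us^T *m Us = 1%:M -> exists V, nn_minimizer B Us V.
Proof.
move=> hU.
have [x fx minx] := qp_exists (lin_mulmx Us) (mxvec (Us^T *m B)).
exists (vec_mx x)^T; split.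
  by rewrite trmxK; apply/(feasE Us (vec_mx x)); rewrite vec_mxK.
move=> W hW; rewrite trmxK !frob_nrm2 (decomp B (vec_mx x) hU) (decomp B W^T hU).
rewrite vec_mxK lerD2l.
by apply: minx; apply/feasE.
Qed.


Lemma mid_min d n k (B : 'M[R]_(d, n)) (Ua Ub : 'M[R]_(d, k)) Va Vb Qa Qb :
  Ub = Ua *m Qa -> Ua = Ub *m Qb ->
  nn_minimizer B Ua Va -> nn_minimizer B Ub Vb -> Ua *m Va^T = Ub *m Vb^T.
Proof.
move=> ea eb [nA mA] [nB mB].
set A1 := Ua *m Va^T; set A2 := Ub *m Vb^T.
have nm : nonneg_mx (2^-1 *: (A1 + A2)).
  move=> i j; have := nA i j; have := nB i j; rewrite !mxE => h1 h2.
  apply: mulr_ge0; first by rewrite invr_ge0.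
  exact: addr_ge0.
have e1 : Ua *m (2^-1 *: (Va^T + Qa *m Vb^T)) = 2^-1 *: (A1 + A2).
  by rewrite -scalemxAr mulmxDr mulmxA -ea.
have e2 : Ub *m (2^-1 *: (Qb *m Va^T + Vb^T)) = 2^-1 *: (A1 + A2).
  by rewrite -scalemxAr mulmxDr mulmxA -eb.
apply: (@mid_unique _ _ B).
  have := mA ((2^-1 *: (Va^T + Qa *m Vb^T))^T).
  by rewrite trmxK !frob_nrm2 e1; apply.
have := mB ((2^-1 *: (Qb *m Va^T + Vb^T))^T).
by rewrite trmxK !frob_nrm2 e2; apply.
Qed.

Definition Uk d k (U0 : 'M[R]_(d, k.+1)) : 'M[R]_(d, k) :=
  \matrix_(i, j) U0 i (widen_ord (leqnSn k) j).

Lemma sv_span d n k (B : 'M[R]_(d, n)) (s : 'I_k.+1 -> R) (U0 : 'M[R]_(d, k.+1))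
    (W0 : 'M[R]_(n, k.+1)) sg u :
  U0^T *m U0 = 1%:M -> W0^T *m W0 = 1%:M ->
  B = U0 *m diag_mx (\row_i s i) *m W0^T ->
  left_singular_vector B sg u -> 0 < s ord_max -> s ord_max < sg ->
  exists z : 'cV[R]_k, u = Uk U0 *m z.
Proof.
move=> hU hW hB [hu [v [hv [h1 h2]]]] s0 ssg.
set D := diag_mx (\row_i s i).
have sg0 : sg != 0 by apply: lt0r_neq0; apply: lt_trans ssg.
have hBB : B *m B^T = U0 *m (D *m D) *m U0^T.
  rewrite hB !trmx_mul trmxK tr_diag_mx -/D.
  by rewrite !mulmxA -(mulmxA _ W0^T) hW mulmx1 -!mulmxA.
have hBu : B *m B^T *m u = (sg ^+ 2) *: u.
  by rewrite -mulmxA h2 -scalemxAr h1 scalerA expr2.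
set w := U0^T *m u.
have hw : D *m D *m w = (sg ^+ 2) *: w.
  have := congr1 (mulmx U0^T) hBu; rewrite hBB !mulmxA hU mul1mx.
  by rewrite -!mulmxA -scalemxAr.
set y := (sg ^+ 2)^-1 *: (D *m D *m w).
have hy : U0 *m y = u.
  rewrite /y -scalemxAr mulmxA (mulmxA U0 D) /w !mulmxA -(mulmxA U0 D D) -hBB hBu scalerA.
  by rewrite mulVf ?scale1r // expf_neq0.
clearbody w.
have ymax : y ord_max 0 = 0.
  have := congr1 (fun M : 'cV[R]_k.+1 => M ord_max 0) hw => /= e.
  rewrite -mulmxA /D mul_diag_mx mul_diag_mx !mxE in e.
  have : (s ord_max * s ord_max - sg ^+ 2) * w ord_max 0 = 0 by rewrite mulrBl -mulrA e subrr.
  move/eqP; rewrite mulf_eq0 => /orP [|/eqP w0].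
    rewrite subr_eq0 -expr2 eqf_sqr => /orP [] /eqP e'.
      by move: ssg; rewrite e' ltxx.
    by move: ssg s0; rewrite e'; lra.
  by rewrite /y -mulmxA /D mul_diag_mx mul_diag_mx !mxE w0 !mulr0.
exists (\col_l y (widen_ord (leqnSn k) l) 0).
apply/matrixP => i j; rewrite !ord1 -hy !mxE big_ord_recr /= ymax mulr0 addr0.
by apply: eq_bigr => l _; rewrite !mxE.
Qed.

Lemma Uk_orth d k (U0 : 'M[R]_(d, k.+1)) :
  U0^T *m U0 = 1%:M -> (Uk U0)^T *m Uk U0 = 1%:M.
Proof.
move=> /matrixP hU; apply/matrixP => i j.
have := hU (widen_ord (leqnSn k) i) (widen_ord (leqnSn k) j).
rewrite !mxE => e; rewrite -[RHS](_ : (widen_ord (leqnSn k) i == widen_ord (leqnSn k) j)%:R = _).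
  by rewrite -e; apply: eq_bigr => l _; rewrite !mxE.
by [].
Qed.

Lemma col_span d k q (M : 'M[R]_(d, q)) (Us : 'M[R]_(d, k)) :
  (forall j : 'I_k, exists z : 'cV[R]_q, col j Us = M *m z) ->
  exists Z : 'M[R]_(q, k), Us = M *m Z.
Proof.
move=> h; have [f hf] := fin_all_exists h.
exists (\matrix_(l, j) f j l 0); apply/matrixP => i j.
have := congr1 (fun N : 'cV[R]_d => N i 0) (hf j) => /=.
rewrite !mxE => ->; apply: eq_bigr => l _; rewrite !mxE //.
Qed.
End Main.

Unset Implicit Arguments.


Theorem proposition2 (R : rcfType) (d n k : nat) (B : 'M[R]_(d, n))
    (s : 'I_k.+1 -> R) :
  (1 <= k)%N ->
  nonneg_mx B ->
  \rank B = k.+1 ->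
  nz_singular_values B s ->
  s (inord k.-1) > s ord_max ->
  (forall Us : 'M[R]_(d, k),
      Us^T *m Us = 1%:M ->
      (forall j : 'I_k,
          left_singular_vector B (s (widen_ord (leqnSn k) j)) (col j Us)) ->
      exists! V : 'M[R]_(n, k), nn_minimizer B Us V) /\
  (forall (Us1 Us2 : 'M[R]_(d, k)) (V1 V2 : 'M[R]_(n, k)),
      Us1^T *m Us1 = 1%:M ->
      (forall j : 'I_k,
          left_singular_vector B (s (widen_ord (leqnSn k) j)) (col j Us1)) ->
      Us2^T *m Us2 = 1%:M ->
      (forall j : 'I_k,
          left_singular_vector B (s (widen_ord (leqnSn k) j)) (col j Us2)) ->
      nn_minimizer B Us1 V1 -> nn_minimizer B Us2 V2 ->
      Us1 *m V1^T = Us2 *m V2^T).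
Proof.
move=> k1 _ _ [sdec [spos [U0 [W0 [hU [hW hB]]]]]] sgap; split.
  move=> Us hUs _; have [V hV] := exists_min B hUs.
  exists V; split => // V' hV'.
  have e := mid_min (esym (mulmx1 Us)) (esym (mulmx1 Us)) hV hV'.
  apply: trmx_inj; by rewrite -[V^T]mul1mx -hUs -mulmxA e mulmxA hUs mul1mx.
have span : forall Us : 'M[R]_(d, k),
    Us^T *m Us = 1%:M ->
    (forall j : 'I_k,
      left_singular_vector B (s (widen_ord (leqnSn k) j)) (col j Us)) ->
    exists Z, Us = Uk U0 *m Z /\ Z *m Z^T = 1%:M.
  move=> Us hUs hsv.
  have [Z eZ] : exists Z, Us = Uk U0 *m Z.
    apply: col_span => j; apply: (sv_span hU hW hB (hsv j) (spos _)).
    apply: lt_le_trans sgap _; apply: sdec.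
    rewrite /= inordK; last by rewrite ltnS leq_pred.
    by rewrite -ltnS prednK // ltn_ord.
  exists Z; split => //; apply: mulmx1C.
  by rewrite -hUs eZ trmx_mul -mulmxA (mulmxA (Uk U0)^T) Uk_orth // mul1mx.
move=> Us1 Us2 V1 V2 h1 s1 h2 s2 m1 m2.
have [Z1 [e1 o1]] := span _ h1 s1.
have [Z2 [e2 o2]] := span _ h2 s2.
apply: (mid_min (Qa := Z1^T *m Z2) (Qb := Z2^T *m Z1)) m1 m2.
  by rewrite e1 e2 -mulmxA [Z1 *m _]mulmxA o1 mul1mx.
by rewrite e1 e2 -mulmxA [Z2 *m _]mulmxA o2 mul1mx.
Qed.
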